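(* The point spectrum of $\dot I_{\mathrm{A}_{\frac12\infty}}$ on $\overline H_{\mathrm{A}_{\frac12\infty},\mathbb{C}}$ is empty, and the point spectrum of $\dot I_{\mathrm{D}_{\frac12\infty}}$ on $\overline H_{\mathrm{D}_{\frac12\infty},\mathbb{C}}$ consists of the single eigenvalue $2$, with multiplicity $1$. In particular, for both $W$, $\ker(\dot I_W)\cap\overline H_{W,\mathbb{C}}=\{0\}$.
   Context: Index sets: $C_{W,0}=\{c_0^{(n)}:n\ge1\}$ (type $\mathrm{A}_{\frac12\infty}$) or $\{c_0^{(n)}:n\ge1\}\cup\{c_0^+,c_0^-\}$ (type $\mathrm{D}_{\frac12\infty}$); $C_{W,1}=\{c_1^{(n)}:n\ge1\}$; $C_W=C_{W,0}\sqcup C_{W,1}$. Adjacency: $c_0^{(n)}$ adjacent to $c_1^{(n)}$ and $c_1^{(n+1)}$; in type D, $c_0^\pm$ adjacent to $c_1^{(1)}$; no others. $\overline H_{W,\mathbb{C}}=\ell^2(C_W)$ with orthonormal basis $\{\gamma_c\}$. $\dot I_W$ is the bounded self-adjoint operator with matrix $\langle\dot I_W\gamma_c,\gamma_{c'}\rangle=2$ if $c=c'$, $-1$ if $c,c'$ adjacent, $0$ otherwise. *)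

(* Defs.v *)
From HB Require Import structures.
From mathcomp Require Import all_boot all_order all_algebra.
From mathcomp Require Import all_classical all_reals all_analysis.
From mathcomp Require Export complex.
Set Implicit Arguments. Unset Strict Implicit. Unset Printing Implicit Defensive.
Import Order.TTheory GRing.Theory Num.Theory.
Local Open Scope ring_scope.

(* ---------- Index sets ---------------------------------------------------
   Type A_{1/2 infty}:  C_A := bool * nat, where
       (false, n) stands for c_0^{(n+1)}  and  (true, n) stands for c_1^{(n+1)}.
   Type D_{1/2 infty}:  C_D := (bool * nat) + bool, where
       inl (b, n) is as above, inr true = c_0^+, inr false = c_0^-.           *)
Definition CA := (bool * nat)%type.
Definition CD := ((bool * nat) + bool)%type.

Definition adjA (c c' : CA) : bool :=
  match c, c' with
  | (false, k), (true, l) => (l == k) || (l == k.+1)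
  | (true, l), (false, k) => (l == k) || (l == k.+1)
  | _, _ => false
  end.

Definition adjD (c c' : CD) : bool :=
  match c, c' with
  | inl x, inl y => adjA x y
  | inl x, inr _ => x == (true, 0%N)
  | inr _, inl y => y == (true, 0%N)
  | inr _, inr _ => false
  end.

Definition nbrsA (c : CA) : seq CA :=
  match c with
  | (false, k) => [:: (true, k); (true, k.+1)]
  | (true, 0%N) => [:: (false, 0%N)]
  | (true, l.+1) => [:: (false, l.+1); (false, l)]
  end.

Definition nbrsD (c : CD) : seq CD :=
  match c with
  | inl (true, 0%N) => [:: inl (false, 0%N); inr true; inr false]
  | inl x => map inl (nbrsA x)
  | inr _ => [:: inl (true, 0%N)]
  end.

Lemma nbrsA_spec c c' : (c' \in nbrsA c) = adjA c c'.
Proof.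
case: c => [[|] [|l]]; case: c' => [[|] [|k]];
  rewrite /= !inE ?orbF /= ?xpair_eqE /= ?eqSS //.
by rewrite (eq_sym k) (eq_sym k.+1).
Qed.

Lemma nbrsD_spec c c' : (c' \in nbrsD c) = adjD c c'.
Proof.
case: c => [[[|] [|l]]|b]; case: c' => [[[|] [|k]]|b'];
  rewrite /= ?inE ?(mem_map (@inl_inj _ _)) ?nbrsA_spec //=
  ?(inj_eq (@inl_inj _ _)) ?(inj_eq (@inr_inj _ _)) /= ?xpair_eqE /= ?eqSS //.
- by case: b'.
- by rewrite (eq_sym k) (eq_sym k.+1).
Qed.

Definition Idot (R : realType) (T : Type) (nbrs : T -> seq T)
    (v : T -> R[i]) : T -> R[i] :=
  fun c => 2 * v c - \sum_(c' <- nbrs c) v c'.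

Definition sqmod (R : realType) (z : R[i]) : R := (complex.Re z) ^+ 2 + (complex.Im z) ^+ 2.

Definition in_l2 (R : realType) (T : choiceType) (v : T -> R[i]) : Prop :=
  (\esum_(c in [set: T]) (sqmod (v c))%:E < +oo)%E.

Definition is_eigvec (R : realType) (T : choiceType) (nbrs : T -> seq T)
    (lam : R[i]) (v : T -> R[i]) : Prop :=
  in_l2 v /\ (forall c, Idot nbrs v c = lam * v c).

Definition point_spectrum (R : realType) (T : choiceType) (nbrs : T -> seq T)
    : set R[i] :=
  [set lam | exists v : T -> R[i], is_eigvec nbrs lam v /\ exists c, v c != 0].

Definition eigmult_one (R : realType) (T : choiceType) (nbrs : T -> seq T)
    (lam : R[i]) : Prop :=
  exists v0 : T -> R[i], is_eigvec nbrs lam v0 /\ (exists c, v0 c != 0) /\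
    forall v, is_eigvec nbrs lam v -> exists a : R[i], forall c, v c = a * v0 c.

(* Main.v *)
Set Warnings "-notation-overridden,-ambiguous-paths,-notation-incompatible-prefix".
Require Import Defs.
From HB Require Import structures.
From mathcomp Require Import all_boot all_order all_algebra.
From mathcomp Require Import all_classical all_reals all_analysis.
From mathcomp Require Import complex.
From mathcomp Require Import ring lra.
Import Order.TTheory GRing.Theory Num.Theory.
Local Open Scope ring_scope.
Local Open Scope classical_set_scope.
Set Implicit Arguments. Unset Strict Implicit.
Section S.
Variable R : realType.
Lemma sqmodM (a b : R[i]) : sqmod (a * b) = sqmod a * sqmod b.
Proof. case: a => a1 a2; case: b => b1 b2; rewrite /sqmod /=. ring. Qed.
Lemma sqmodD (a b : R[i]) : sqmod (a + b) <= 2 * (sqmod a + sqmod b).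
Proof. case: a => a1 a2; case: b => b1 b2; rewrite /sqmod /=.
have := sqr_ge0 (a1 - b1); have := sqr_ge0 (a2 - b2). nra. Qed.
Lemma sqmodN (a : R[i]) : sqmod (- a) = sqmod a.
Proof. case: a => a1 a2; rewrite /sqmod /=. ring. Qed.
Lemma sqmod_ge0 (a : R[i]) : 0 <= sqmod a.
Proof. case: a => a1 a2; rewrite /sqmod /=. nra. Qed.
Lemma sqmod_eq0 (a : R[i]) : sqmod a = 0 -> a = 0.
Proof. case: a => a1 a2; rewrite /sqmod /= => h.
have h1 : a1 = 0 by nra. have h2 : a2 = 0 by nra. by rewrite h1 h2. Qed.
Lemma path_zero (u : nat -> R[i]) (mu : R[i]) :
 (forall n, u n.+2 = mu * u n.+1 - u n) ->
 (forall e : R, 0 < e -> exists n, sqmod (u n) + sqmod (u n.+1) < e) ->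
 u 0%N ^+ 2 + u 1%N ^+ 2 - mu * u 0%N * u 1%N = 0.
Proof.
move=> rec small.
pose E n := u n ^+ 2 + u n.+1 ^+ 2 - mu * u n * u n.+1.
have EC : forall n, E n = E 0%N.
  elim=> [//|n IH]; rewrite -IH /E rec; ring.
apply: sqmod_eq0; apply/eqP; rewrite eq_le sqmod_ge0 andbT; apply/negP => /negP.
rewrite -ltNge => c0.
set c := sqmod _ in c0.
set K := 4 + 2 * sqmod mu.
have K0 : 0 < K by rewrite /K; have := sqmod_ge0 mu; lra.
have [n hn] := small (c / (K + c)) (divr_gt0 c0 (addr_gt0 K0 c0)).
have hc : c = sqmod (E n) by rewrite EC.
have sa := sqmod_ge0 (u n); have sb := sqmod_ge0 (u n.+1); have sm := sqmod_ge0 mu.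
set a := sqmod (u n) in hn sa; set b := sqmod (u n.+1) in hn sb.
have e1 : c / (K + c) < 1.
  rewrite ltr_pdivrMr; last by apply: addr_gt0. lra.
have eK : K * (c / (K + c)) < c.
  have -> : K * (c / (K + c)) = c - c * (c / (K + c)).
    field. by apply/eqP => h; move: (addr_gt0 K0 c0); rewrite h ltxx.
  have : 0 < c * (c / (K + c)) by apply: mulr_gt0 => //; apply: divr_gt0 => //; apply: addr_gt0.
  lra.
set e := c / (K + c) in hn e1 eK.
have hE : sqmod (E n) <= K * e.
  rewrite /E.
  apply: (le_trans (sqmodD _ _)); rewrite sqmodN !sqmodM.
  have := sqmodD (u n ^+ 2) (u n.+1 ^+ 2); rewrite !expr2 !sqmodM -/a -/b => h.
  have e0 : 0 <= e by lra.
  have h1 : a * a + b * b <= e by nra.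
  have h2 : a * b <= e by nra.
  have h3 : sqmod mu * (a * b) <= sqmod mu * e by apply: ler_wpM2l.
  rewrite /K -mulrA.
  have -> : (4 + 2 * sqmod mu) * e = 4 * e + 2 * (sqmod mu * e) by ring.
  lra.
lra.
Qed.
Lemma l2_small (T : choiceType) (v : T -> R[i]) (x : nat -> T) :
  injective x -> in_l2 v ->
  forall e : R, 0 < e -> exists n, sqmod (v (x n)) + sqmod (v (x n.+1)) < e.
Proof.
move=> xinj hl2 e e0.
pose f n := sqmod (v (x n)).
have f0 n : 0 <= f n by exact: sqmod_ge0.
have hle N : ((\sum_(k < N) f k)%:E <=
    \esum_(c in [set: T]) (sqmod (v c))%:E)%E.
  apply: esum_ge; exists (x @` `I_N).
    by split; [apply: finite_image; exact: finite_II|].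
  rewrite fsbig_image; last by move=> a b _ _; exact: xinj.
  by rewrite -fsbig_ord sumEFin.
move: hl2; rewrite /in_l2.
move: (\esum_(c in [set: T]) (sqmod (v c))%:E)%E hle => S hle hS.
have [M hM] : exists M : R, forall N, \sum_(k < N) f k <= M.
  case: S hle hS => [r| |] hle hS //.
    by exists r => N; rewrite -lee_fin hle.
  by have := hle 0%N; rewrite big_ord0.
apply/not_existsP => /= hall.
have hge : forall n, e <= f n + f n.+1 by move=> n; rewrite leNgt; apply/negP; exact: hall.
have hK : forall K, K%:R * e <= \sum_(k < K.*2) f k.
  elim=> [|K IH]; first by rewrite big_ord0 mul0r.
  rewrite doubleS !big_ord_recr /= -/(f _) -addrA.
  have := hge K.*2; rewrite -/(f _) => h.
  rewrite -[K.+1]addn1 natrD mulrDl mul1r.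
  by apply: lerD.
have M0 : 0 <= M by have := hM 0%N; rewrite big_ord0.
have := hK (Num.Def.truncn (M / e)).+1.
have := truncnS_gt (M / e).
rewrite ltr_pdivrMr // => h1 h2.
have := hM (Num.Def.truncn (M / e)).+1.*2.
lra.
Qed.
Lemma rec_zero (u : nat -> R[i]) (mu : R[i]) :
 (forall n, u n.+2 = mu * u n.+1 - u n) -> u 0%N = 0 -> u 1%N = 0 -> forall n, u n = 0.
Proof.
move=> rec h0 h1.
have : forall n, u n = 0 /\ u n.+1 = 0.
  elim=> [|n [IH1 IH2]]; first by [].
  by split=> //; rewrite rec IH1 IH2 mulr0 subr0.
by move=> H n; case: (H n).
Qed.

Lemma rec_const (u : nat -> R[i]) (eps : R[i]) :
 eps ^+ 2 = 1 -> sqmod eps = 1 ->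
 (forall n, u n.+2 = (2 * eps) * u n.+1 - u n) -> u 1%N = eps * u 0%N ->
 forall n, sqmod (u n) = sqmod (u 0%N).
Proof.
move=> e2 se rec h1.
have H : forall n, u n.+1 = eps * u n.
  elim=> [//|n IH]; rewrite rec.
  have -> : u n = eps * u n.+1 by rewrite IH mulrA -expr2 e2 mul1r.
  ring.
elim=> [//|n IH]; by rewrite H sqmodM se mul1r.
Qed.
End S.

Definition xA (n : nat) : CA := (~~ odd n, n./2).
Definition yD (n : nat) : CD := inl (xA n).

Lemma xA_even k : xA k.*2 = (true, k).
Proof. by rewrite /xA odd_double half_double. Qed.
Lemma xA_odd k : xA k.*2.+1 = (false, k).
Proof. by rewrite /xA /= odd_double /= uphalf_double. Qed.

Lemma xA_inj : injective xA.
Proof.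
move=> m n [] h1 h2.
rewrite -[m]odd_double_half -[n]odd_double_half h2.
by move: h1; case: (odd m); case: (odd n).
Qed.

Lemma yD_inj : injective yD.
Proof. move=> m n h; apply: xA_inj; exact: (congr1 (fun c : CD => if c is inl x then x else (true, 0%N)) h). Qed.

Lemma xA_surj c : exists n, xA n = c.
Proof.
case: c => b k; exists ((~~ b) + k.*2)%N.
rewrite /xA oddD odd_double half_bit_double.
by case: b.
Qed.

Lemma CD_cases c : (exists n, c = yD n) \/ (exists b, c = inr b).
Proof.
case: c => [x|b]; last by right; exists b.
by left; have [n hn] := xA_surj x; exists n; rewrite /yD hn.
Qed.

Lemma nbrsA_parity (P : nat -> Prop) :
  (forall k, P k.*2) -> (forall k, P k.*2.+1) -> forall n, P n.
Proof.
move=> he ho n; rewrite -[n]odd_double_half.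
by case: (odd n) => /=; [apply: ho | rewrite add0n; apply: he].
Qed.

Section S2.
Variable R : realType.

Lemma sumA_0 (w : CA -> R[i]) : \sum_(c <- nbrsA (xA 0)) w c = w (xA 1).
Proof. by rewrite /= big_cons big_nil addr0. Qed.

Lemma sumA_S (w : CA -> R[i]) n :
  \sum_(c <- nbrsA (xA n.+1)) w c = w (xA n) + w (xA n.+2).
Proof.
elim/nbrsA_parity: n => k.
  by rewrite -doubleS (xA_odd k) (xA_even k) (xA_even k.+1) /= !big_cons big_nil addr0.
rewrite -!doubleS (xA_even k.+1) (xA_odd k) (xA_odd k.+1) /= !big_cons big_nil addr0.
by rewrite addrC.
Qed.

Lemma nbrsD_S n : nbrsD (yD n.+1) = map inl (nbrsA (xA n.+1)).
Proof.
elim/nbrsA_parity: n => k; first by rewrite /yD xA_odd.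
by rewrite /yD -doubleS xA_even.
Qed.

Lemma sumD_S (w : CD -> R[i]) n :
  \sum_(c <- nbrsD (yD n.+1)) w c = w (yD n) + w (yD n.+2).
Proof. by rewrite nbrsD_S big_map (sumA_S (fun c => w (inl c))). Qed.

Lemma sumD_0 (w : CD -> R[i]) :
  \sum_(c <- nbrsD (yD 0)) w c = w (yD 1) + w (inr true) + w (inr false).
Proof. by rewrite /= !big_cons big_nil addr0 addrA. Qed.

Lemma sumD_inr (w : CD -> R[i]) b :
  \sum_(c <- nbrsD (inr b)) w c = w (yD 0).
Proof. by rewrite /= big_cons big_nil addr0. Qed.

End S2.
Section S3.
Variable R : realType.

Lemma A_zero (lam : R[i]) (v : CA -> R[i]) : in_l2 v ->
  (forall c, Idot nbrsA v c = lam * v c) -> forall c, v c = 0.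
Proof.
move=> hl2 hev.
pose u n := v (xA n).
have rec : forall n, u n.+2 = (2 - lam) * u n.+1 - u n.
  move=> n; have := hev (xA n.+1); rewrite /Idot sumA_S -/(u _) -/(u _) -/(u _) => h.
  rewrite mulrBl -h; ring.
have h1 : u 1%N = (2 - lam) * u 0%N.
  have := hev (xA 0); rewrite /Idot sumA_0 -/(u _) -/(u _) => h.
  rewrite mulrBl -h; ring.
have E := path_zero rec (l2_small xA_inj hl2).
have u0 : u 0%N = 0.
  apply/eqP; rewrite -(sqrf_eq0 (u 0%N)); apply/eqP.
  by rewrite -E h1; ring.
have u1 : u 1%N = 0 by rewrite h1 u0 mulr0.
have uz := rec_zero rec u0 u1.
by move=> c; have [n <-] := xA_surj c; exact: uz.
Qed.

Lemma sqmod1 : sqmod (1 : R[i]) = 1.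
Proof. by rewrite /sqmod /=; ring. Qed.
Lemma sqmodN1 : sqmod (-1 : R[i]) = 1.
Proof. by rewrite sqmodN sqmod1. Qed.

Lemma D_struct (lam : R[i]) (v : CD -> R[i]) : in_l2 v ->
  (forall c, Idot nbrsD v c = lam * v c) ->
  [/\ forall n, v (yD n) = 0, v (inr false) = - v (inr true) &
      (2 - lam) * v (inr true) = 0].
Proof.
move=> hl2 hev.
pose u n := v (yD n).
set p := v (inr true); set m := v (inr false); set mu := 2 - lam.
have rec : forall n, u n.+2 = mu * u n.+1 - u n.
  move=> n; have := hev (yD n.+1); rewrite /Idot sumD_S -/(u _) -/(u _) -/(u _) => h.
  rewrite mulrBl -h; ring.
have hp : mu * p = u 0%N.
  have := hev (inr true); rewrite /Idot sumD_inr -/(u _) -/p => h.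
  rewrite mulrBl -h; ring.
have hm : mu * m = u 0%N.
  have := hev (inr false); rewrite /Idot sumD_inr -/(u _) -/m => h.
  rewrite mulrBl -h; ring.
have hu1 : u 1%N = mu * u 0%N - (p + m).
  have := hev (yD 0); rewrite /Idot sumD_0 -/(u _) -/(u _) -/p -/m => h.
  rewrite mulrBl -h; ring.
have small := l2_small yD_inj hl2.
have E := path_zero rec small.
have hs : mu * (p + m) = 2 * u 0%N by rewrite mulrDr hp hm; ring.
have hs2 : (p + m) ^+ 2 - u 0%N ^+ 2 = 0.
  have -> : (p + m) ^+ 2 - u 0%N ^+ 2 =
    (u 0%N ^+ 2 + u 1%N ^+ 2 - mu * u 0%N * u 1%N) + u 0%N * (mu * (p + m) - 2 * u 0%N).
    by rewrite hu1; ring.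
  by rewrite E hs subrr mulr0 addr0.
have contra : forall eps : R[i], eps ^+ 2 = 1 -> sqmod eps = 1 ->
    mu = 2 * eps -> u 1%N = eps * u 0%N -> u 0%N = 0.
  move=> eps e2 se hmu h1.
  have rec' : forall n, u n.+2 = (2 * eps) * u n.+1 - u n by rewrite -hmu.
  have hc := rec_const e2 se rec' h1.
  apply: sqmod_eq0; apply/eqP; rewrite eq_le sqmod_ge0 andbT; apply/negP => /negP.
  rewrite -ltNge => c0.
  have [n] := small _ c0.
  by rewrite !hc; lra.
have u0 : u 0%N = 0.
  apply/eqP; apply/negP => /negP nz.
  move: hs2; rewrite subr_sqr => /eqP; rewrite mulf_eq0 => /orP [].
    rewrite subr_eq0 => /eqP hpm.
    have hmu : mu = 2 * 1.
      apply: (mulIf nz); rewrite -{1}hpm hs; ring.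
    have : u 0%N = 0.
      apply: (contra 1) => //; first by rewrite expr1n.
        exact: sqmod1.
      by rewrite hu1 hpm hmu; ring.
    by move/eqP; rewrite (negbTE nz).
  rewrite addr_eq0 => /eqP hpm.
  have hmu : mu = 2 * -1.
    apply: (mulIf nz); apply: (@oppr_inj _); rewrite -mulrN -hpm hs; ring.
  have : u 0%N = 0.
    apply: (contra (-1)) => //; first by rewrite sqrrN expr1n.
      exact: sqmodN1.
    by rewrite hu1 hpm hmu; ring.
  by move/eqP; rewrite (negbTE nz).
have s0 : p + m = 0.
  apply/eqP; rewrite -(sqrf_eq0 (p + m)); apply/eqP.
  by move: hs2; rewrite u0 expr0n /= subr0.
have u1 : u 1%N = 0 by rewrite hu1 u0 s0 mulr0 subr0.
split.
- exact: rec_zero rec u0 u1.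
- by apply/eqP; rewrite -addr_eq0 addrC s0.
- by rewrite hp.
Qed.

End S3.
Definition v0D (R : realType) : CD -> R[i] :=
  fun c => match c with inr true => 1 | inr false => -1 | inl _ => 0 end.

Lemma v0D_l2 (R : realType) : in_l2 (v0D R).
Proof.
rewrite /in_l2 (esumID [set inr true; inr false]); last first.
  by move=> i _; rewrite lee_fin; exact: sqmod_ge0.
rewrite [X in (_ + X)%E]esum1; last first.
  move=> i [_ h]; case: i h => [x|[|]] h.
  - by rewrite /sqmod /=; congr (_%:E); ring.
  - by exfalso; apply: h; left.
  - by exfalso; apply: h; right.
rewrite adde0 esum_fset; last by move=> i _; rewrite lee_fin; exact: sqmod_ge0.
  by rewrite fsumEFin ?ltry //; rewrite setTI; exact: finite_set2.
by rewrite setTI; exact: finite_set2.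
Qed.

Lemma v0D_eig (R : realType) c : Idot nbrsD (v0D R) c = 2 * v0D R c.
Proof.
rewrite /Idot; case: c => [[[|] [|k]]|[|]] /=; rewrite !big_cons ?big_nil /=; ring.
Qed.

Unset Implicit Arguments.
Theorem mainTheorem10 (R : realType) :
  [/\ point_spectrum (R := R) nbrsA = set0,
      point_spectrum (R := R) nbrsD = [set 2],
      eigmult_one (R := R) nbrsD 2,
      (forall v : CA -> R[i], in_l2 v -> (forall c, Idot nbrsA v c = 0) ->
         forall c, v c = 0) &
      (forall v : CD -> R[i], in_l2 v -> (forall c, Idot nbrsD v c = 0) ->
         forall c, v c = 0)].
Proof.
split.
- apply/seteqP; split => lam //= [v [[hl2 hev] [c hc]]].
  by move: hc; rewrite (A_zero hl2 hev) eqxx.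
- apply/seteqP; split => lam /=.
    move=> [v [[hl2 hev] [c hc]]].
    have [hy hm hp] := D_struct hl2 hev.
    have pnz : v (inr true) != 0.
      case: (CD_cases c) hc => [[n ->]|[[|] ->]] hc //; first by rewrite hy eqxx in hc.
      by move: hc; rewrite hm oppr_eq0.
    move: hp => /eqP; rewrite mulf_eq0 (negbTE pnz) orbF subr_eq0 => /eqP <-.
    by [].
  move=> ->; exists (v0D R); split; first by split; [exact: v0D_l2 | exact: v0D_eig].
  by exists (inr true); rewrite /= oner_eq0.
- exists (v0D R); split; first by split; [exact: v0D_l2 | exact: v0D_eig].
  split; first by exists (inr true); rewrite /= oner_eq0.
  move=> v [hl2 hev]; have [hy hm _] := D_struct hl2 hev.
  exists (v (inr true)) => c; case: (CD_cases c) => [[n ->]|[[|] ->]] /=.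
  + by rewrite hy mulr0.
  + by rewrite mulr1.
  + by rewrite hm mulrN1.
- move=> v hl2 hev; apply: (A_zero (lam := 0)) hl2 _ => c.
  by rewrite hev mul0r.
- move=> v hl2 hev.
  have hev' : forall c, Idot nbrsD v c = 0 * v c by move=> c; rewrite hev mul0r.
  have [hy hm hp] := D_struct hl2 hev'.
  have p0 : v (inr true) = 0.
    by move: hp => /eqP; rewrite subr0 mulf_eq0 pnatr_eq0 /= => /eqP.
  move=> c; case: (CD_cases c) => [[n ->]|[[|] ->]] //.
  by rewrite hm p0 oppr0.
Qed.
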